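(* Let $S$ be a ramified inverse semigroup with zero. Let $A=\{a_1,\dots,a_n\}^{\downarrow}$, where $\{a_1,\dots,a_n\}$ is a finite set of pairwise compatible elements of $S$. Then $A=\{b_1,\dots,b_m\}^{\downarrow}$ for some finite set $\{b_1,\dots,b_m\}$ of pairwise orthogonal elements.
   Context: The natural partial order is used; $X^{\downarrow}=\{s\in S : s\le x \text{ for some } x\in X\}$. Elements $s,t$ are compatible if $s^{-1}t$ and $st^{-1}$ are idempotents, orthogonal if $s^{-1}t=0=st^{-1}$. $S$ is ramified if for all $a,b,c\in S$ with $a\ne0$, $a\le b$ and $a\le c$ imply $b\le c$ or $c\le b$. *)

(* Defs.v *)
From Stdlib Require Import List.
Import ListNotations.

Record InvSemigroup0 := {
  carrier :> Type;
  mul : carrier -> carrier -> carrier;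
  inv : carrier -> carrier;
  zero : carrier;
  mul_assoc : forall a b c, mul a (mul b c) = mul (mul a b) c;
  zero_mull : forall a, mul zero a = zero;
  zero_mulr : forall a, mul a zero = zero;
  inv_regular1 : forall s, mul (mul s (inv s)) s = s;
  inv_regular2 : forall s, mul (mul (inv s) s) (inv s) = inv s;
  inv_unique : forall s t, mul (mul s t) s = s -> mul (mul t s) t = t -> t = inv s
}.

Arguments mul {S} : rename.
Arguments inv {S} : rename.
Arguments zero {S} : rename.

Definition idempotent {S : InvSemigroup0} (e : S) : Prop := mul e e = e.

Definition nleq {S : InvSemigroup0} (s t : S) : Prop := s = mul (mul t (inv s)) s.

Definition compatible {S : InvSemigroup0} (s t : S) : Prop :=
  idempotent (mul (inv s) t) /\ idempotent (mul s (inv t)).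

Definition orthogonal {S : InvSemigroup0} (s t : S) : Prop :=
  mul (inv s) t = zero /\ mul s (inv t) = zero.

Definition downset {S : InvSemigroup0} (X : list S) (s : S) : Prop :=
  exists x, In x X /\ nleq s x.

Definition ramified (S : InvSemigroup0) : Prop :=
  forall a b c : S, a <> zero -> nleq a b -> nleq a c -> nleq b c \/ nleq c b.

(* Main.v *)
Require Import Defs.
From Stdlib Require Import List Classical.

Section Alg.
Lemma assoc {S : InvSemigroup0} (a b c : S) : mul a (mul b c) = mul (mul a b) c.
Proof. apply mul_assoc. Qed.

Ltac regroup T := transitivity T; [rewrite ?assoc; reflexivity|].

Lemma inv_inv {S : InvSemigroup0} (s : S) : inv (inv s) = s.
Proof. symmetry; apply inv_unique; [apply inv_regular2 | apply inv_regular1]. Qed.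

Lemma idem_inv {S : InvSemigroup0} (e : S) : idempotent e -> inv e = e.
Proof. intro H; unfold idempotent in H. symmetry; apply inv_unique; rewrite !H; auto. Qed.

Lemma idem_ss {S : InvSemigroup0} (s : S) : idempotent (mul (inv s) s).
Proof. unfold idempotent. rewrite assoc, inv_regular2; auto. Qed.

Lemma idem_ss' {S : InvSemigroup0} (s : S) : idempotent (mul s (inv s)).
Proof. unfold idempotent. rewrite assoc, inv_regular1; auto. Qed.

Lemma idem_mul {S : InvSemigroup0} (e f : S) :
  idempotent e -> idempotent f -> idempotent (mul e f).
Proof.
  intros He Hf. unfold idempotent in *.
  set (x := inv (mul e f)).
  assert (Hx : mul (mul f x) e = x).
  { apply inv_unique.
    - regroup (mul (mul (mul e (mul f f)) x) (mul (mul e e) f)).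
      rewrite He, Hf. unfold x. apply inv_regular1.
    - regroup (mul (mul f (mul (mul x (mul (mul e e) (mul f f))) x)) e).
      rewrite He, Hf. unfold x. rewrite inv_regular2. reflexivity. }
  assert (Hxx : mul x x = x).
  { rewrite <- Hx at 1 2.
    regroup (mul (mul f (mul (mul x (mul e f)) x)) e).
    unfold x. rewrite inv_regular2. fold x. exact Hx. }
  assert (Hxe : x = mul e f).
  { rewrite <- (idem_inv x Hxx). unfold x. apply inv_inv. }
  rewrite <- Hxe. exact Hxx.
Qed.

Lemma idem_comm {S : InvSemigroup0} (e f : S) :
  idempotent e -> idempotent f -> mul e f = mul f e.
Proof.
  intros He Hf.
  assert (H1 := idem_mul e f He Hf). assert (H2 := idem_mul f e Hf He).
  unfold idempotent in *.
  rewrite <- (idem_inv (mul e f) H1).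
  symmetry; apply inv_unique.
  - regroup (mul (mul e (mul f f)) (mul (mul e e) f)). rewrite He, Hf. exact H1.
  - regroup (mul (mul f (mul e e)) (mul (mul f f) e)). rewrite He, Hf. exact H2.
Qed.

Lemma inv_mul {S : InvSemigroup0} (s t : S) : inv (mul s t) = mul (inv t) (inv s).
Proof.
  symmetry; apply inv_unique.
  - regroup (mul (mul s (mul (mul t (inv t)) (mul (inv s) s))) t).
    rewrite (idem_comm _ _ (idem_ss' t) (idem_ss s)).
    regroup (mul (mul (mul s (inv s)) s) (mul (mul t (inv t)) t)).
    rewrite !inv_regular1. reflexivity.
  - regroup (mul (mul (inv t) (mul (mul (inv s) s) (mul t (inv t)))) (inv s)).
    rewrite (idem_comm _ _ (idem_ss s) (idem_ss' t)).
    regroup (mul (mul (mul (inv t) t) (inv t)) (mul (mul (inv s) s) (inv s))).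
    rewrite !inv_regular2. reflexivity.
Qed.

Lemma nleq_iff {S : InvSemigroup0} (s t : S) :
  nleq s t <-> exists e, idempotent e /\ s = mul t e.
Proof.
  split.
  - intro H. exists (mul (inv s) s). split; [apply idem_ss|]. unfold nleq in H.
    rewrite <- assoc in H. exact H.
  - intros [e [He Hs]]. subst s. unfold nleq.
    rewrite inv_mul, (idem_inv e He). symmetry.
    regroup (mul (mul t (mul e (mul (inv t) t))) e).
    rewrite (idem_comm _ _ He (idem_ss t)).
    regroup (mul (mul (mul t (inv t)) t) (mul e e)).
    rewrite inv_regular1. unfold idempotent in He. rewrite He. reflexivity.
Qed.

Lemma le_refl {S : InvSemigroup0} (s : S) : nleq s s.
Proof. unfold nleq. symmetry; apply inv_regular1. Qed.

Lemma le_trans {S : InvSemigroup0} (s t u : S) : nleq s t -> nleq t u -> nleq s u.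
Proof.
  rewrite !nleq_iff. intros [e [He Hs]] [f [Hf Ht]].
  exists (mul f e). split; [apply idem_mul; auto|]. subst. apply eq_sym, assoc.
Qed.

Lemma le_antisym {S : InvSemigroup0} (s t : S) : nleq s t -> nleq t s -> s = t.
Proof.
  rewrite !nleq_iff. intros [e [He Hs]] [f [Hf Ht]].
  assert (H1 : s = mul s (mul f e)) by (rewrite assoc, <- Ht; exact Hs).
  assert (H2 : mul s f = s).
  { rewrite H1 at 1. regroup (mul s (mul f (mul e f))). rewrite (idem_comm e f He Hf).
    unfold idempotent in Hf. regroup (mul s (mul (mul f f) e)). rewrite Hf. auto. }
  rewrite Ht, H2. reflexivity.
Qed.

Lemma le_idem_r {S : InvSemigroup0} (s e : S) : idempotent e -> nleq (mul s e) s.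
Proof. intro He. apply nleq_iff. exists e; auto. Qed.

Lemma le_idem_l {S : InvSemigroup0} (f s : S) : idempotent f -> nleq (mul f s) s.
Proof.
  intro Hf. apply nleq_iff. exists (mul (mul (inv s) f) s). split.
  - unfold idempotent.
    regroup (mul (mul (inv s) (mul f (mul s (inv s)))) (mul f s)).
    rewrite (idem_comm _ _ Hf (idem_ss' s)).
    regroup (mul (mul (mul (inv s) s) (inv s)) (mul (mul f f) s)).
    rewrite inv_regular2. unfold idempotent in Hf. rewrite Hf. apply assoc.
  - symmetry. regroup (mul (mul (mul s (inv s)) f) s).
    rewrite <- (idem_comm _ _ Hf (idem_ss' s)).
    regroup (mul f (mul (mul s (inv s)) s)). rewrite inv_regular1. reflexivity.
Qed.

Lemma orth_lemma {S : InvSemigroup0} (HS : ramified S) (x y : S) :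
  compatible x y -> ~ nleq x y -> ~ nleq y x -> orthogonal x y.
Proof.
  intros [H1 H2] N1 N2.
  assert (Hz : mul (mul x (inv y)) y = zero).
  { apply NNPP; intro Hnz.
    assert (A : nleq (mul (mul x (inv y)) y) x).
    { rewrite <- assoc. apply le_idem_r, idem_ss. }
    assert (B : nleq (mul (mul x (inv y)) y) y) by (apply le_idem_l; auto).
    destruct (HS _ _ _ Hnz A B); auto. }
  assert (Hw : mul (mul x (inv x)) y = zero).
  { apply NNPP; intro Hnz.
    assert (A : nleq (mul (mul x (inv x)) y) x).
    { rewrite <- assoc. apply le_idem_r; auto. }
    assert (B : nleq (mul (mul x (inv x)) y) y) by (apply le_idem_l, idem_ss').
    destruct (HS _ _ _ Hnz A B); auto. }
  split.
  - rewrite <- (inv_regular2 _ x). regroup (mul (inv x) (mul (mul x (inv x)) y)).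
    rewrite Hw. apply zero_mulr.
  - rewrite <- (inv_regular2 _ y). regroup (mul (mul (mul x (inv y)) y) (inv y)).
    rewrite Hz. apply zero_mull.
Qed.

Lemma filter_ex {S : Type} (P : S -> Prop) (L : list S) :
  exists L', forall x, In x L' <-> In x L /\ P x.
Proof.
  induction L as [|a L [L' IH]].
  - exists nil. simpl. tauto.
  - destruct (classic (P a)).
    + exists (a :: L'). intro x. simpl. rewrite IH. split; [intros [<-|?]|intros [[<-|?] ?]]; tauto.
    + exists L'. intro x. simpl. rewrite IH. split; [tauto|]. intros [[<-|?] ?]; tauto.
Qed.
End Alg.

Lemma main_gen (S : InvSemigroup0) (HS : ramified S) (As : list S)
  (Hcomp : forall x y, In x As -> In y As -> x <> y -> compatible x y) :
  exists Bs : list S, (forall x, In x Bs -> In x As) /\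
    (forall x y, In x Bs -> In y Bs -> x <> y -> orthogonal x y) /\
    (forall s, downset As s <-> downset Bs s).
Proof.
  induction As as [|a As0 IH].
  - exists nil. repeat split; simpl; try tauto.
  - destruct IH as [Bs0 [Hsub [Horth Hdown]]].
    { intros x y Hx Hy. apply Hcomp; simpl; auto. }
    destruct (classic (exists b, In b Bs0 /\ nleq a b)) as [[b [Hb Hab]]|Hno].
    + exists Bs0. split; [intros; simpl; auto|]. split; [exact Horth|].
      intro s. split.
      * intros [x [[<-|Hx] Hsx]].
        -- exists b. split; auto. eapply le_trans; eauto.
        -- apply Hdown. exists x; auto.
      * intro H. apply Hdown in H. destruct H as [x [Hx Hsx]]. exists x; simpl; auto.
    + destruct (filter_ex (fun x => ~ nleq x a) Bs0) as [F HF].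
      exists (a :: F). split; [|split].
      * intros x [<-|Hx]; simpl; auto. apply HF in Hx. right; apply Hsub; tauto.
      * assert (K : forall y, In y F -> orthogonal a y /\ orthogonal y a).
        { intros y Hy. apply HF in Hy. destruct Hy as [Hy Nya].
          assert (Nay : ~ nleq a y) by (intro; apply Hno; eauto).
          assert (Hne : a <> y) by (intros <-; apply Nya, le_refl).
          split; apply orth_lemma; auto; apply Hcomp; simpl; auto. }
        intros x y [<-|Hx] [<-|Hy] Hne.
        -- congruence.
        -- apply K; auto.
        -- apply K; auto.
        -- apply HF in Hx. apply HF in Hy. apply Horth; tauto.
      * intro s. split.
        -- intros [x [[<-|Hx] Hsx]].
           ++ exists a; simpl; auto.
           ++ destruct (proj1 (Hdown s) (ex_intro _ x (conj Hx Hsx))) as [b [Hb Hsb]].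
              destruct (classic (nleq b a)).
              ** exists a. simpl; split; auto. eapply le_trans; eauto.
              ** exists b. simpl; split; auto. right. apply HF; auto.
        -- intros [x [[<-|Hx] Hsx]].
           ++ exists a; simpl; auto.
           ++ apply HF in Hx. destruct (proj2 (Hdown s) (ex_intro _ x (conj (proj1 Hx) Hsx))) as [y [Hy Hsy]].
              exists y; simpl; auto.
Qed.

Theorem lemma3p8 (S : InvSemigroup0) (HS : ramified S) (As : list S)
  (Hcomp : forall x y, In x As -> In y As -> x <> y -> compatible x y) :
  exists Bs : list S,
    (forall x y, In x Bs -> In y Bs -> x <> y -> orthogonal x y) /\
    (forall s, downset As s <-> downset Bs s).
Proof.
  destruct (main_gen S HS As Hcomp) as [Bs [_ H]]. exists Bs; exact H.
Qed.
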